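(* Fix integers $m>1$ and $K>\lfloor m/2\rfloor$. Let $\{z_n\}$ be generated by $\mathcal{S}(\kappa,\Phi)$ with $\kappa$ satisfying $\sum_n\rho^{\kappa(n)}=\infty$ for all $0<\rho\le1$ and $\Phi(x,S)=|V_S(x)|-\operatorname{modefreq}_f(V_S(x))$ with $V_S(x)$ the $K$-nearest neighbors of $x$ with respect to $S$, and let $\zeta_n(x)=\operatorname{mode}_f(U_{Z_n}(x))$ be the $m$ nearest neighbors prediction. If $x\in X$ is contained in an $f$-contiguous component of positive $\mu$-measure, then $\zeta_n(x)\to f(x)$ with probability one.
   Context: $(X,d)$ metric space with probability measure $\mu$; $Y$ countable; $f:X\to Y$; $X_y=f^{-1}(y)$; $\operatorname{supp}(\mu)=\{x:\mu(B_\epsilon(x))>0\ \forall\epsilon>0\}$. $b$ is an $f$-boundary point iff $\mu(B_\epsilon(b)\setminus X_{f(b)})>0$ for all $\epsilon>0$. $R$ is $f$-connected iff connected and contained in some $X_y$; $f$-contiguous iff $f$-connected, contained in $\operatorname{supp}(\mu)$, and with no $f$-boundary points; an $f$-contiguous component is a maximal $f$-contiguous set. $\operatorname{modefreq}_f(A)=\max_y|A\cap X_y|$ ($0$ for empty $A$); $\operatorname{mode}_f(A)$ is a $y$ attaining it (ties uniformly at random). $K$-nearest neighbors: $V_S(x)=\emptyset$ if $x\in S$, otherwise a $K$-element subset of $S$ minimizing distance to $x$, chosen among such to minimize $\operatorname{modefreq}_f$. $m$ nearest neighbors: $U_S(x)=\{x\}$ if $x\in S$, otherwise an $m$-element subset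 of $S$ minimizing distance to $x$, chosen among such to minimize $\operatorname{modefreq}_f$. Process $\mathcal{S}(\kappa,\Phi)$: $Z_0=\emptyset$; at step $n$ draw $\kappa(n)$ candidates i.i.d. from $\mu$, independent of the past; $z_n$ maximizes $\Phi(\cdot,Z_{n-1})$ over candidates (ties uniformly at random); $Z_n=\{z_1,\dots,z_n\}$. *)

(* Defs.v *)
From HB Require Import structures.
From mathcomp Require Import all_boot all_order all_algebra.
From mathcomp Require Import finmap.
From mathcomp Require Import all_classical all_reals all_analysis.
Set Implicit Arguments. Unset Strict Implicit. Unset Printing Implicit Defensive.
Import Order.TTheory GRing.Theory Num.Theory.
Local Open Scope classical_set_scope.
Local Open Scope ring_scope.

Section MetricDefs.
Variables (R : realType) (dX : measure_display) (X : measurableType dX).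
Variable (dist : X -> X -> R).

Definition is_metric :=
  [/\ forall x y, 0 <= dist x y,
      forall x y, dist x y = 0 <-> x = y,
      forall x y, dist x y = dist y x &
      forall x y z, dist x z <= dist x y + dist y z].

Definition mball (x : X) (e : R) : set X := [set y | dist x y < e].

Definition mopen (A : set X) : Prop :=
  forall x, A x -> exists2 e : R, 0 < e & mball x e `<=` A.

Definition mconnected (C : set X) : Prop :=
  ~ exists U V : set X,
      [/\ mopen U /\ mopen V, C `<=` U `|` V,
          C `&` U !=set0, C `&` V !=set0 & C `&` U `&` V = set0].

Definition borel_of_metric : Prop :=
  forall A : set X, measurable A <-> <<s mopen >> A.

Variable (mu : probability X R).
Variables (Y : countType) (f : X -> Y).

Definition fiber (y : Y) : set X := f @^-1` [set y].

Definition supp : set X :=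
  [set x | forall e : R, 0 < e -> (0 < mu (mball x e))%E].

Definition f_boundary_point (b : X) : Prop :=
  forall e : R, 0 < e -> (0 < mu (mball b e `\` fiber (f b)))%E.

Definition f_connected (C : set X) : Prop :=
  mconnected C /\ exists y, C `<=` fiber y.

Definition f_contiguous (C : set X) : Prop :=
  [/\ f_connected C, C `<=` supp & ~ exists2 b, C b & f_boundary_point b].

Definition f_contiguous_component (C : set X) : Prop :=
  f_contiguous C /\ forall D, f_contiguous D -> C `<=` D -> D = C.

(** modefreq_f(A) = max_y |A cap X_y|  (the max is attained at a label of an
    element of A; it is 0 for empty A) *)
Definition modefreq (A : {fset X}) : nat :=
  \max_(a <- A) #|` [fset b in A | f b == f a]%fset|.

Definition nearest_sets (k : nat) (S : {fset X}) (x : X) (V : {fset X}) : Prop :=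
  [/\ (V `<=` S)%fset, #|` V| = minn k #|` S| &
      forall v s, v \in V -> s \in S -> s \notin V -> dist x v <= dist x s].

Definition is_knn_V (k : nat) (S : {fset X}) (x : X) (V : {fset X}) : Prop :=
  if x \in S then V = fset0 else
  nearest_sets k S x V /\
  forall V', nearest_sets k S x V' -> (modefreq V <= modefreq V')%N.

Definition is_knn_U (k : nat) (S : {fset X}) (x : X) (U : {fset X}) : Prop :=
  if x \in S then U = [fset x]%fset else
  nearest_sets k S x U /\
  forall U', nearest_sets k S x U' -> (modefreq U <= modefreq U')%N.

Definition mode_ties (A : {fset X}) : seq Y :=
  path.sort (fun a b : Y => (choice.pickle a <= choice.pickle b)%N)
    (undup [seq f a | a <- A & #|` [fset b in A | f b == f a]%fset| == modefreq A]).

(** mode_f(A), ties broken by the uniform [0,1) variable w: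
    the floor(w * #ties)-th tied label (default y0 if A is empty) *)
Definition mode_with (y0 : Y) (w : R) (A : {fset X}) : Y :=
  let T := mode_ties A in nth y0 T (Num.truncn (w * (size T)%:R)).

End MetricDefs.

Section Process.
Variables (R : realType) (dX : measure_display) (X : measurableType dX).
Variables (Y : countType) (f : X -> Y).
Variables (dO : measure_display) (Omega : measurableType dO).
Variable (kappa : nat -> nat).
Variable (Phi : X -> {fset X} -> nat).
(** c n j = j-th candidate (j < kappa n) of step n;
    u n = uniform [0,1) variable for tie breaking at step n *)
Variables (c : nat -> nat -> Omega -> X) (u : nat -> Omega -> R).

Definition select (n : nat) (S : {fset X}) (om : Omega) : X :=
  let js := iota 0 (kappa n) in
  let mx := \max_(j <- js) Phi (c n j om) S in
  let M := [seq j <- js | Phi (c n j om) S == mx] in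
  c n (nth 0%N M (Num.truncn (u n om * (size M)%:R))) om.

Fixpoint Zset (n : nat) (om : Omega) : {fset X} :=
  match n with
  | 0 => fset0%fset
  | n'.+1 => (select n'.+1 (Zset n' om) om |` Zset n' om)%fset
  end.
End Process.

Section Indep.
Variables (R : realType) (dO : measure_display) (Omega : measurableType dO).
Variable (P : probability Omega R).

Definition mutually_independent (I : eqType) (E : I -> set (set Omega)) : Prop :=
  forall (J : seq I) (A : I -> set Omega), uniq J ->
    (forall i, i \in J -> E i (A i)) ->
    P [set om | forall i, i \in J -> A i om] = (\prod_(i <- J) P (A i))%E.

Definition rv_events (dT : measure_display) (T : measurableType dT)
  (Z : Omega -> T) : set (set Omega) :=
  [set A | exists2 B, measurable B & A = Z @^-1` B].
End Indep.

(* Main.v *)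
Require Import Defs.
From HB Require Import structures.
From mathcomp Require Import all_boot all_order all_algebra.
From mathcomp Require Import finmap.
From mathcomp Require Import all_classical all_reals all_analysis.
From mathcomp Require Import ring lra.
Import Order.TTheory GRing.Theory Num.Theory.
Local Open Scope classical_set_scope.
Local Open Scope ring_scope.

Section Det.
Variables (R : realType) (dX : measure_display) (X : measurableType dX).
Variable (dist : X -> X -> R).
Variables (Y : countType) (f : X -> Y).
Variables (dO : measure_display) (Omega : measurableType dO).
Variables (kappa : nat -> nat) (Phi : X -> {fset X} -> nat).
Variables (c : nat -> nat -> Omega -> X) (u : nat -> Omega -> R).

Lemma select_cand n S om : exists2 j, (j < kappa n \/ j = 0)%N &
  select kappa Phi c u n S om = c n j om.
Proof.
rewrite /select.
set M := [seq j <- _ | _]. set k := Num.truncn _.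
case: (ltnP k (size M)) => H.
  exists (nth 0%N M k) => //; left.
  have: nth 0%N M k \in M by exact: mem_nth.
  by rewrite mem_filter mem_iota add0n => /andP[_ /andP[_]].
by exists 0%N; [right|rewrite nth_default].
Qed.

Lemma Zset_sub n n' om : (n <= n')%N ->
  (Zset kappa Phi c u n om `<=` Zset kappa Phi c u n' om)%fset.
Proof.
elim: n' => [|n' IH]; first by rewrite leqn0 => /eqP ->.
rewrite leq_eqVlt => /orP[/eqP -> //|]; rewrite ltnS => /IH H.
by apply: fsubset_trans H _; exact: fsubsetU1.
Qed.

Lemma Zset_cand n om z : z \in Zset kappa Phi c u n om ->
  exists i j, z = c i j om.
Proof.
elim: n => [|n IH] //=.
rewrite !inE => /orP[/eqP ->|/IH //].
have [j _ ->] := select_cand n.+1 (Zset kappa Phi c u n om) om.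
by exists n.+1, j.
Qed.

Lemma mode_with_const y (w : R) (A : {fset X}) :
  (forall a, a \in A -> f a = y) -> mode_with f y w A = y.
Proof.
move=> HA; rewrite /mode_with.
set T := mode_ties _ _. set k := Num.truncn _.
case: (ltnP k (size T)) => H; last by rewrite nth_default.
have: nth y T k \in T by exact: mem_nth.
rewrite /T /mode_ties mem_sort mem_undup => /mapP [a].
rewrite mem_filter => /andP[_ aA] ->.
exact: HA.
Qed.


Hypothesis kappa_gt0 : forall n, (0 < kappa n)%N.
Hypothesis dmet : is_metric dist.

Lemma fin_min (x : X) (e : R) (s : seq X) : 0 < e -> x \notin s ->
  exists2 r, 0 < r & r <= e /\ forall z, z \in s -> r <= dist x z.
Proof.
case: dmet => d0 deq _ _.
move=> e0; elim: s => [|a s IH]; first by move=> _; exists e.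
rewrite in_cons negb_or => /andP[xa /IH [r r0 [re Hr]]].
have dxa : 0 < dist x a.
  rewrite lt_neqAle d0 andbT eq_sym; apply/eqP => /deq xa'.
  by rewrite xa' eqxx in xa.
exists (Num.min r (dist x a)); first by rewrite lt_min r0 dxa.
split; first by rewrite ge_min re.
move=> z; rewrite in_cons => /orP[/eqP ->|zs]; first by rewrite ge_min lexx orbT.
by rewrite ge_min Hr.
Qed.

Let Z := Zset kappa Phi c u.

Lemma det_main (x : X) (e : R) (m : nat) (Usel : {fset X} -> {fset X}) om
  (w0 : nat -> R) :
  0 < e ->
  (forall S, is_knn_U dist f m S x (Usel S)) ->
  (forall i j, dist x (c i j om) < e -> f (c i j om) = f x) ->
  (forall r, 0 < r -> forall N, exists2 n, (N <= n)%N &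
      forall j, (j < kappa n)%N -> dist x (c n j om) < r) ->
  exists N, forall n, (N <= n)%N ->
    mode_with f (f x) (w0 n) (Usel (Z n om)) = f x.
Proof.
move=> e0 HU Ha Hb.
pose g n := #|` [fset z in Z n om | dist x z < e]%fset|.
have gmono n n' : (n <= n')%N -> (g n <= g n')%N.
  move=> nn'; apply: fsubset_leq_card; apply/fsubsetP => z.
  rewrite !inE /= => /andP[zZ ->]; rewrite andbT.
  by apply: (fsubsetP (Zset_sub _ _ om nn')).
have step i : exists N, x \in Z N om \/ (i <= g N)%N.
  elim: i => [|i [N HN]]; first by exists 0%N; right.
  case: HN => [xZ|HN]; first by exists N; left.
  case: (boolP (x \in Z N om)) => [xZ|xZ]; first by exists N; left.
  have [r r0 [re Hr]] := fin_min x e (Z N om) e0 xZ.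
  have [n Nn Hn] := Hb r r0 N.+1.
  case: n Nn Hn => [//|n] Nn Hn.
  exists n.+1; right.
  have [j jk Hz] := select_cand n.+1 (Z n om) om.
  have -> : g n.+1 = #|` [fset z0 in c n.+1 j om |` Z n om | dist x z0 < e]%fset|.
    by rewrite /g /Z /= -/(Z n om) Hz.
  have jk' : (j < kappa n.+1)%N by case: jk => [//|->]; exact: kappa_gt0.
  set z := c n.+1 j om.
  have dz : dist x z < r := Hn j jk'.
  have zN : z \notin [fset z0 in Z N om | dist x z0 < e]%fset.
    rewrite !inE /=; apply/negP => /andP[zZ _].
    by have := Hr z zZ; rewrite leNgt dz.
  have sub : (z |` [fset z0 in Z N om | dist x z0 < e] `<=`
             [fset z0 in z |` Z n om | dist x z0 < e])%fset.
    apply/fsubsetP => y; rewrite !inE /= => /orP[/eqP ->|/andP[yZ ->]].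
      by rewrite eqxx /= (lt_le_trans dz re).
    by rewrite (fsubsetP (Zset_sub N n om Nn) _ yZ) orbT.
  apply: leq_trans (fsubset_leq_card sub).
  by rewrite cardfsU1 zN add1n ltnS.
have [N0 HN0] := step m.
exists N0 => n N0n.
apply: mode_with_const => a aU.
have := HU (Z n om); rewrite /is_knn_U; move: aU.
case: ifP => [xZ aU E|xZ aU [[sub cardU near] _]].
  by move: aU; rewrite E inE => /eqP ->.
have mg : (m <= g n)%N.
  case: HN0 => [xZ0|]; last by move=> H; apply: leq_trans H (gmono _ _ N0n).
  by rewrite (fsubsetP (Zset_sub _ _ om N0n) _ xZ0) in xZ.
have aZ : a \in Z n om by exact: (fsubsetP sub).
have [i [j aij]] := Zset_cand _ _ _ aZ.
rewrite aij; apply: Ha; rewrite -aij.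
rewrite ltNge; apply/negP => ea.
set G := [fset z in Z n om | dist x z < e]%fset.
have GU : (a |` G `<=` Usel (Z n om))%fset.
  apply/fsubsetP => s; rewrite !inE /= => /orP[/eqP -> //|/andP[sZ ds]].
  apply/negPn/negP => sU.
  by have := near a s aU sZ sU; rewrite leNgt (lt_le_trans ds ea).
have aG : a \notin G by rewrite !inE /= negb_and ltNge ea orbT.
have := fsubset_leq_card GU; rewrite cardfsU1 aG cardU add1n.
move=> H; have := leq_trans mg (ltnW (leq_trans H (geq_minl _ _))).
by move: H => /leq_trans/(_ (geq_minl _ _)); rewrite ltnNge mg.
Qed.

End Det.

Set Implicit Arguments. Unset Strict Implicit.

Section Prob.
Variables (R : realType) (dO : measure_display) (Omega : measurableType dO).
Variable (P : probability Omega R).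

Definition allin (s : seq nat) (F : nat -> set Omega) : set Omega :=
  [set om | forall i, i \in s -> F i om].

Definition q (S : set Omega) : R := fine (P S).

Lemma PE S : measurable S -> P S = (q S)%:E.
Proof. by move=> mS; rewrite /q fineK // fin_num_measure. Qed.

Lemma allin_nil F : allin [::] F = setT.
Proof. by apply/seteqP; split => om //= _ i. Qed.

Lemma allin_cons a s F : allin (a :: s) F = F a `&` allin s F.
Proof.
apply/seteqP; split => om /=.
  by move=> H; split; [apply: H; rewrite mem_head|move=> i iS; apply: H; rewrite in_cons iS orbT].
by move=> [Fa H] i; rewrite in_cons => /orP[/eqP ->//|/H].
Qed.

Lemma allin_meas F s : (forall i, measurable (F i)) -> measurable (allin s F).
Proof.
move=> mF; elim: s => [|a s IH]; first by rewrite allin_nil.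
by rewrite allin_cons; exact: measurableI.
Qed.

Lemma compl_prod (F : nat -> set Omega) : (forall i, measurable (F i)) ->
  (forall s, uniq s -> q (allin s F) = \prod_(i <- s) q (F i)) ->
  forall L J, uniq (L ++ J) ->
  q (allin J F `&` allin L (fun i => ~` F i)) =
    \prod_(i <- J) q (F i) * \prod_(i <- L) (1 - q (F i)).
Proof.
move=> mF H; elim => [|a L IH] J.
  by move=> uJ; rewrite allin_nil setIT big_nil mulr1 H.
move=> uaLJ.
have uLJ : uniq (L ++ J) by move: uaLJ; rewrite cat_cons => /andP[].
have uLaJ : uniq (L ++ a :: J).
  have pe : perm_eq (L ++ a :: J) (a :: L ++ J).
    by rewrite (perm_catCA L [:: a] J).
  by rewrite (perm_uniq pe).
have mC s : measurable (allin s (fun i => ~` F i)).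
  by apply: allin_meas => i; apply: measurableC.
set X := allin J F `&` allin L (fun i => ~` F i).
have mX : measurable X by apply: measurableI; [exact: allin_meas|exact: mC].
have E1 : allin J F `&` allin (a :: L) (fun i => ~` F i) = X `\` F a.
  rewrite allin_cons /X; apply/seteqP; split => om /=.
    by move=> [h1 [h2 h3]].
  by move=> [[h1 h3] h2].
have E2 : X `&` F a = allin (a :: J) F `&` allin L (fun i => ~` F i).
  rewrite allin_cons /X; apply/seteqP; split => om /=.
    by move=> [[h1 h3] h2].
  by move=> [[h1 h2] h3].
rewrite E1 /q measureD //; last by rewrite ltey_eq fin_num_measure.
rewrite fineB; first last.
- by apply: fin_num_measure; exact: measurableI.
- exact: fin_num_measure.
rewrite -!/(q _) E2 (IH J uLJ) (IH (a :: J) uLaJ) !big_cons.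
by rewrite /q; ring.
Qed.

Lemma prod_bound (g : nat -> R) (l : seq nat) :
  (forall n, 0 <= g n <= 1) ->
  \prod_(n <- l) (1 - g n) * (1 + \sum_(n <- l) g n) <= 1.
Proof.
move=> hg; elim: l => [|a l IH]; first by rewrite !big_nil addr0 mulr1.
rewrite !big_cons.
have p0 : 0 <= \prod_(n <- l) (1 - g n).
  by apply: prodr_ge0 => i _; have /andP[_ ?] := hg i; rewrite subr_ge0.
have s0 : 0 <= \sum_(n <- l) g n.
  by apply: sumr_ge0 => i _; have /andP[? _] := hg i.
have /andP[a0 a1] := hg a.
set p := \prod_(n <- l) _ in p0 IH *. set t := \sum_(n <- l) _ in s0 IH *.
have h : 0 <= g a * (p * (g a + t)) by rewrite !mulr_ge0 // addr_ge0.
have -> : (1 - g a) * p * (1 + (g a + t)) = p * (1 + t) - g a * (p * (g a + t)) by ring.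
lra.
Qed.

End Prob.

Lemma prod_iota_const (R : realType) (r : R) a k :
  \prod_(j <- iota a k) r = r ^+ k.
Proof.
elim: k a => [|k IH] a; first by rewrite big_nil expr0.
by rewrite /= big_cons IH exprS.
Qed.

Section Block.
Variables (R : realType) (dX : measure_display) (X : measurableType dX).
Variable (mu : probability X R).
Variables (dO : measure_display) (Omega : measurableType dO).
Variable (P : probability Omega R).
Variables (kappa : nat -> nat) (c : nat -> nat -> Omega -> X) (u w : nat -> Omega -> R).
Hypothesis hc : forall n j, measurable_fun setT (c n j).
Hypothesis hcd : forall n j B, measurable B -> P (c n j @^-1` B) = mu B.
Hypothesis Hind : mutually_independent P
    (fun i : ((nat * nat) + nat) + nat => match i with
     | inl (inl nj) => rv_events (c nj.1 nj.2)
     | inl (inr n) => rv_events (u n)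
     | inr n => rv_events (w n)
     end).
Variable B : set X.
Hypothesis mB : measurable B.

Definition Ablk n := allin (iota 0 (kappa n)) (fun j => c n j @^-1` B).

Lemma mcB n j : measurable (c n j @^-1` B).
Proof. by rewrite -[_ @^-1` _]setTI; apply: hc. Qed.

Lemma mAblk n : measurable (Ablk n).
Proof. by apply: allin_meas => j; exact: mcB. Qed.

Lemma block_indep s : uniq s ->
  q P (allin s Ablk) = \prod_(n <- s) (fine (mu B)) ^+ kappa n.
Proof.
move=> us.
pose J := [seq (inl (inl (n, j)) : ((nat*nat)+nat)+nat) | n <- s, j <- iota 0 (kappa n)].
pose Aev (i : ((nat*nat)+nat)+nat) : set Omega :=
  match i with inl (inl nj) => c nj.1 nj.2 @^-1` B | _ => setT end.
have uJ : uniq J.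
  apply: allpairs_uniq_dep => //; first by move=> n _; exact: iota_uniq.
  by move=> [a b] [a' b'] _ _ /= [-> ->].
have := Hind (J:=J) (A:=Aev) uJ.
have -> : [set om | forall i, i \in J -> Aev i om] = allin s Ablk.
  apply/seteqP; split => om /=.
    move=> H n ns j jk; apply: (H (inl (inl (n, j)))).
    by apply: (allpairs_f_dep (fun n j => (inl (inl (n, j)) : ((nat*nat)+nat)+nat))).
  move=> H i /allpairsPdep [n [j [ns jk ->]]] /=.
  exact: H.
have cl : forall i, i \in J -> (fun i : ((nat * nat) + nat) + nat => match i with
     | inl (inl nj) => rv_events (c nj.1 nj.2)
     | inl (inr n) => rv_events (u n)
     | inr n => rv_events (w n)
     end) i (Aev i).
  move=> i /allpairsPdep [n [j [ns jk ->]]] /=.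
  by exists B.
move=> /(_ cl); rewrite /q => ->.
rewrite big_allpairs_dep /=.
have E n : (\prod_(j <- iota 0 (kappa n)) P (c n j @^-1` B))%E =
           ((fine (mu B)) ^+ kappa n)%:E.
  rewrite (eq_bigr (fun _ => (fine (mu B))%:E)); last first.
    by move=> j _; rewrite hcd // fineK // fin_num_measure.
  by rewrite prodEFin prod_iota_const.
by rewrite (eq_bigr _ (fun n _ => E n)) prodEFin /=.
Qed.

End Block.

Lemma sum_mono_nat (R : realType) (g : nat -> R) m n :
  (forall k, 0 <= g k) -> (m <= n)%N ->
  \sum_(0 <= i < m) g i <= \sum_(0 <= i < n) g i.
Proof.
move=> g0 mn; rewrite (@big_cat_nat _ _ _ m 0 n) // lerDl.
by apply: sumr_ge0 => i _.
Qed.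

Lemma diverge (R : realType) (g : nat -> R) : (forall n, 0 <= g n) ->
  (\sum_(1 <= n <oo) (g n)%:E)%E = +oo%E ->
  forall N b, exists M, b <= \sum_(n <- iota N M) g n.
Proof.
move=> g0 Hs N b.
case: (pselect (exists M, b <= \sum_(n <- iota N M) g n)) => // /forallNP H.
have : (\sum_(1 <= n <oo) (g n)%:E <= (\sum_(0 <= n < N) g n + b)%:E)%E.
  apply: lime_le.
    by apply: is_cvg_nneseries => n _ _; rewrite lee_fin.
  apply: nearW => M; rewrite sumEFin lee_fin.
  have h1 : \sum_(1 <= i < M) g i <= \sum_(0 <= i < N + M) g i.
    case: M => [|M]; first by rewrite big_geq // sumr_ge0.
    apply: le_trans (sum_mono_nat g0 (leq_addl N M.+1)).
    rewrite (@big_cat_nat _ _ _ 1 0 M.+1) // lerDr.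
    by apply: sumr_ge0 => i _.
  apply: le_trans h1 _.
  rewrite (@big_cat_nat _ _ _ N 0 (N + M)) ?leq_addr // lerD2l.
  have -> : \sum_(N <= i < N + M) g i = \sum_(n <- iota N M) g n.
    by rewrite /index_iota addKn.
  by rewrite leNgt; apply/negP => /ltW /(H M).
by rewrite Hs leye_eq.
Qed.

Unset Implicit Arguments.

Section Tail.
Variables (R : realType) (dX : measure_display) (X : measurableType dX).
Variable (mu : probability X R).
Variables (dO : measure_display) (Omega : measurableType dO).
Variable (P : probability Omega R).
Variables (kappa : nat -> nat) (c : nat -> nat -> Omega -> X) (u w : nat -> Omega -> R).
Hypothesis hc : forall n j, measurable_fun setT (c n j).
Hypothesis hcd : forall n j B, measurable B -> P (c n j @^-1` B) = mu B.
Hypothesis Hind : mutually_independent P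
    (fun i : ((nat * nat) + nat) + nat => match i with
     | inl (inl nj) => rv_events (c nj.1 nj.2)
     | inl (inr n) => rv_events (u n)
     | inr n => rv_events (w n)
     end).
Variable B : set X.
Hypothesis mB : measurable B.
Hypothesis Hsum' :
  (\sum_(1 <= n <oo) ((fine (mu B)) ^+ kappa n)%:E)%E = +oo%E.

Lemma tail_null N :
  P.-negligible (\bigcap_(n in [set n | (N <= n)%N]) ~` Ablk kappa c B n).
Proof.
set E := \bigcap_(n in _) _.
set rho := fine (mu B).
have mE : measurable E.
  apply: bigcap_measurable; first by exists N => /=.
  by move=> n _; apply: measurableC; exact: mAblk.
exists E; split => //.
rewrite (PE P mE).
suff -> : q P E = 0 by [].
have q0 : 0 <= q P E by apply: fine_ge0; exact: measure_ge0.
have muBE : mu B = rho%:E by rewrite fineK // fin_num_measure.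
have rho0 : 0 <= rho by apply: fine_ge0; exact: measure_ge0.
have rho1 : rho <= 1 by have := probability_le1 mu mB; rewrite muBE lee_fin.
have gb n : 0 <= rho ^+ kappa n <= 1 by rewrite exprn_ge0 // exprn_ile1.
have g0 n : 0 <= rho ^+ kappa n by have /andP[] := gb n.
have qA n : q P (Ablk kappa c B n) = rho ^+ kappa n.
  have := block_indep kappa hcd Hind mB (s := [:: n]) isT.
  by rewrite allin_cons allin_nil setIT big_seq1.
have Hq : forall s, uniq s -> q P (allin s (Ablk kappa c B)) =
    \prod_(i <- s) q P (Ablk kappa c B i).
  move=> s us; rewrite (block_indep kappa hcd Hind mB us).
  by apply: eq_bigr => n _; rewrite qA.
apply/eqP; rewrite eq_le q0 andbT leNgt; apply/negP => qpos.
have [M HM] := diverge g0 Hsum' N (q P E)^-1.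
have HC := compl_prod (mAblk kappa hc mB) Hq (L := iota N M) (J := [::]).
rewrite cats0 iota_uniq allin_nil setTI big_nil mul1r in HC.
have {}HC := HC isT.
rewrite (eq_bigr (fun n => 1 - rho ^+ kappa n)) in HC; last first.
  by move=> n _; rewrite qA.
have sub : E `<=` allin (iota N M) (fun i => ~` Ablk kappa c B i).
  move=> om Hom i; rewrite mem_iota => /andP[Ni _]; exact: Hom i Ni.
have le1 : q P E <= q P (allin (iota N M) (fun i => ~` Ablk kappa c B i)).
  have mS : measurable (allin (iota N M) (fun i => ~` Ablk kappa c B i)).
    by apply: allin_meas => i; apply: measurableC; exact: mAblk.
  apply: fine_le; try exact: fin_num_measure.
  by apply: le_measure => //; rewrite inE.
rewrite HC in le1.
have pb := prod_bound (g := fun n => rho ^+ kappa n) (iota N M) gb.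
set p := \prod_(n <- iota N M) _ in le1 pb.
set S := \sum_(n <- iota N M) _ in HM pb.
have S0 : 0 <= S by apply: sumr_ge0.
have qt : q P E * (q P E)^-1 = 1 by rewrite mulfV // gt_eqF.
have h1 : q P E * (q P E)^-1 <= q P E * S by rewrite ler_wpM2l.
have h2 : q P E * (1 + S) <= p * (1 + S) by rewrite ler_wpM2r // addr_ge0.
have h3 : q P E * (1 + S) = q P E + q P E * S by ring.
lra.
Qed.

End Tail.

Theorem mainTheorem12
  (R : realType)
  (dX : measure_display) (X : measurableType dX) (dist : X -> X -> R)
  (mu : probability X R) (Y : countType) (f : X -> Y)
  (m K : nat) (kappa : nat -> nat)
  (Vsel Usel : {fset X} -> X -> {fset X})
  (dO : measure_display) (Omega : measurableType dO) (P : probability Omega R)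
  (c : nat -> nat -> Omega -> X) (u w : nat -> Omega -> R) (x : X) :
  is_metric dist ->
  borel_of_metric dist ->
  (forall y, measurable (fiber f y)) ->
  (1 < m)%N -> (m./2 < K)%N ->
  (forall n, (0 < kappa n)%N) ->
  (forall rho : R, 0 < rho <= 1 ->
     (\sum_(1 <= n <oo) (rho ^+ kappa n)%:E)%E = +oo%E) ->
  (forall S z, is_knn_V dist f K S z (Vsel S z)) ->
  (forall S z, is_knn_U dist f m S z (Usel S z)) ->
  (* randomness: candidates i.i.d. ~ mu, uniform tie-breakers, all independent *)
  (forall n j, measurable_fun setT (c n j)) ->
  (forall n j B, measurable B -> P (c n j @^-1` B) = mu B) ->
  (forall n, measurable_fun setT (u n)) ->
  (forall n, measurable_fun setT (w n)) ->
  (forall n om, 0 <= u n om < 1) ->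
  (forall n om, 0 <= w n om < 1) ->
  (forall n t, 0 <= t <= 1 -> P [set om | u n om < t] = t%:E) ->
  (forall n t, 0 <= t <= 1 -> P [set om | w n om < t] = t%:E) ->
  mutually_independent P
    (fun i : ((nat * nat) + nat) + nat => match i with
     | inl (inl nj) => rv_events (c nj.1 nj.2)
     | inl (inr n) => rv_events (u n)
     | inr n => rv_events (w n)
     end) ->
  (* x lies in an f-contiguous component of positive measure *)
  (exists C, [/\ f_contiguous_component dist mu f C, C x,
                 measurable C & (0 < mu C)%E]) ->
  let Phi := fun z S => (#|` Vsel S z| - modefreq f (Vsel S z))%N in
  let Z := Zset kappa Phi c u in
  let zeta := fun n om => mode_with f (f x) (w n om) (Usel (Z n om) x) in
  {ae P, forall om, exists N, forall n, (N <= n)%N -> zeta n om = f x}.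
Proof.
move=> Hmet Hborel Hfib Hm HK Hk Hsum HV HU hc hcd hu hw hu01 hw01 hud hwd Hind.
move=> [C [[[Cfc Csupp Cnob] _] Cx mC muC]] Phi Z zeta.
have xsupp := Csupp x Cx.
have mball_meas r : measurable (mball dist x r).
  apply/Hborel; apply: sub_sigma_algebra.
  move=> y; rewrite /mball /= => dy; exists (r - dist x y); first by rewrite subr_gt0.
  move=> z; rewrite /mball /= => dz.
  case: Hmet => _ _ _ tri.
  by apply: le_lt_trans (tri x y z) _; rewrite -ltrBrDl.
have [e He] : exists e, ~ (0 < e -> (0 < mu (mball dist x e `\` fiber f (f x)))%E).
  apply/existsNP => H; apply: Cnob; exists x => //.
move/not_implyP: He => [e0 /negP He].
set D := mball dist x e `\` fiber f (f x).
have mD : measurable D by apply: measurableD; [exact: mball_meas|exact: Hfib].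
have muD : mu D = 0%E.
  by apply/eqP; rewrite eq_le measure_ge0 andbT leNgt.
have Bad1 : P.-negligible (\bigcup_i \bigcup_j (c i j @^-1` D)).
  apply: negligible_bigcup => i; apply: negligible_bigcup => j.
  exists (c i j @^-1` D); split => //; first by rewrite -[_ @^-1` _]setTI; apply: hc.
  exact: (etrans (hcd i j D mD) muD).
pose r k : R := (k.+1%:R)^-1.
have r0 k : 0 < r k by rewrite invr_gt0.
have Bad2 : P.-negligible (\bigcup_k \bigcup_N
    (\bigcap_(n in [set n | (N <= n)%N]) ~` Ablk kappa c (mball dist x (r k)) n)).
  apply: negligible_bigcup => k; apply: negligible_bigcup => N.
  apply: (@tail_null _ _ _ mu _ _ P kappa c u w hc hcd Hind _ (mball_meas (r k))).
  have muBE : mu (mball dist x (r k)) = (fine (mu (mball dist x (r k))))%:E.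
    by rewrite fineK // fin_num_measure.
  apply: Hsum; apply/andP; split.
    by rewrite -lte_fin -muBE; exact: xsupp.
  by rewrite -lee_fin -muBE probability_le1.
have Bad := negligibleU Bad1 Bad2.
apply: (negligibleS _ Bad).
move=> om /= nG; apply: contrapT => nbad; apply: nG.
have Ha : forall i j, dist x (c i j om) < e -> f (c i j om) = f x.
  move=> i j dij; apply: contrapT => fne; apply: nbad; left.
  by exists i => //; exists j => //=.
have Hb : forall r', 0 < r' -> forall N, exists2 n, (N <= n)%N &
    forall j, (j < kappa n)%N -> dist x (c n j om) < r'.
  move=> r' r'0 N.
  pose k := Num.truncn (r'^-1).
  have rk : r k <= r'.
    have h := truncnS_gt (r'^-1).
    have a0 : 0 < (k.+1%:R : R) by [].
    have ia : r k * k.+1%:R = 1 by rewrite /r mulVf // gt_eqF.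
    have ir : r' * r'^-1 = 1 by rewrite mulfV // gt_eqF.
    have rk0 := r0 k.
    have h1 : r' * r'^-1 <= r' * k.+1%:R by rewrite ler_wpM2l // ?ltW.
    have h2 : r k * (r' * r'^-1) <= r k * (r' * k.+1%:R) by rewrite ler_wpM2l // ltW.
    have h3 : r k * (r' * k.+1%:R) = r' * (r k * k.+1%:R) by ring.
    rewrite ir mulr1 h3 ia mulr1 in h2; exact: h2.
  case: (pselect (exists2 n, (N <= n)%N &
    forall j, (j < kappa n)%N -> dist x (c n j om) < r')) => // nH.
  exfalso; apply: nbad; right; exists k => //; exists N => //.
  move=> n Nn Aom; apply: nH; exists n => // j jk.
  have := Aom j; rewrite mem_iota /= => /(_ jk).
  by rewrite /mball /= => /lt_le_trans; apply.
have := @det_main _ _ _ dist _ f _ _ kappa Phi c u Hk Hmet x e m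
  (fun S => Usel S x) om (fun n => w n om) e0 (fun S => HU S x) Ha Hb.
by move=> [N HN]; exists N => n Nn; exact: HN n Nn.
Qed.
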